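(* Let $K$ be an algebraically closed field with $\operatorname{char}K=p>0$. Let $G$ be a finite subgroup of $SL_2(K)$ and $Q$ a $p$-Sylow subgroup of $G$. Assume $Q$ is normal in $G$, $Q$ is elementary abelian, and $G/Q$ is cyclic. Then there exist a positive integer $n$ with $p\nmid n$, a primitive $n$-th root of unity $\zeta_n\in K$, an $\mathbb{F}_p(\zeta_n^2)$-subspace $V\subseteq K$ of finite $\mathbb{F}_p$-dimension $r$, an element $b\in K$, and $g\in SL_2(K)$ such that $gGg^{-1}$ is the subgroup generated by the matrices $\begin{pmatrix}1&v\\0&1\end{pmatrix}$ ($v\in V$) together with $\begin{pmatrix}\zeta_n&b\\0&\zeta_n^{-1}\end{pmatrix}$; i.e. $G$ is conjugate to a group $G(n,p^r)$.
   Context: For $p\nmid n$, $s=[\mathbb{F}_p(\zeta_n^2):\mathbb{F}_p]$ and $s\mid r$, the group $G(n,p^r)$ is realized inside $SL_2(K)$ as the subgroup generated by $\begin{pmatrix}1&v\\0&1\end{pmatrix}$, $v\in V$, and $\begin{pmatrix}\zeta_n&a\\0&\zeta_n^{-1}\end{pmatrix}$, where $V\subseteq K$ is an $\mathbb{F}_p(\zeta_n^2)$-subspace with $\dim_{\mathbb{F}_p}V=r$ and $a\in K$ (with $a=0$ if $n\le 2$). *)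

(* Defs.v *)
From HB Require Import structures.
From mathcomp Require Import all_boot all_order all_algebra.
From mathcomp Require Import finmap.
Set Implicit Arguments. Unset Strict Implicit. Unset Printing Implicit Defensive.
Import Order.TTheory GRing.Theory Num.Theory.
Local Open Scope fset_scope.
Local Open Scope ring_scope.

Section Defs.
Variable K : fieldType.
Local Notation M := 'M[K]_2.

Definition mx2 (a b c d : K) : M :=
  \matrix_(i < 2, j < 2)
    if (i : nat) == 0%N then (if (j : nat) == 0%N then a else b)
    else (if (j : nat) == 0%N then c else d).

Definition is_subgroup (H : {fset M}) : Prop :=
  [/\ (1 : M) \in H,
      (forall x y, x \in H -> y \in H -> x * y \in H) &
      (forall x, x \in H -> x \is a GRing.unit /\ x^-1 \in H)].

Definition finite_SL2_subgroup (G : {fset M}) : Prop :=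
  is_subgroup G /\ (forall x, x \in G -> \det x = 1).

Definition is_pSylow (p : nat) (G Q : {fset M}) : Prop :=
  [/\ is_subgroup Q, Q `<=` G & #|` Q| = (#|` G|)`_p]%N.

Definition is_normal_in (G Q : {fset M}) : Prop :=
  forall g q, g \in G -> q \in Q -> g * q * g^-1 \in Q.

Definition elem_abelian (p : nat) (Q : {fset M}) : Prop :=
  forall x y, x \in Q -> y \in Q -> x * y = y * x /\ x ^+ p = 1.

(* G/Q cyclic: some x in G whose coset generates G/Q *)
Definition quotient_cyclic (G Q : {fset M}) : Prop :=
  exists2 x, x \in G & forall g, g \in G -> exists k : nat, exists2 q, q \in Q & g = x ^+ k * q.

(* subgroup of GL_2(K) generated by a set S (all subgroups, not only finite) *)
Definition subgroup_pred (H : M -> Prop) : Prop :=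
  [/\ H 1, (forall x y, H x -> H y -> H (x * y)) &
      (forall x, H x -> x \is a GRing.unit /\ H x^-1)].

Definition generated (S : M -> Prop) (x : M) : Prop :=
  forall H : M -> Prop, subgroup_pred H -> (forall y, S y -> H y) -> H x.

(* the subfield F_p(z) of K (z algebraic over the prime field F_p):
   values at z of polynomials with coefficients in the prime subfield *)
Definition Fp_adj (z : K) (x : K) : Prop :=
  exists q : {poly K}, (forall i, exists m : nat, q`_i = m%:R) /\ x = q.[z].

Definition is_Fp_adj_subspace (z : K) (V : {fset K}) : Prop :=
  [/\ (0 : K) \in V,
      (forall u v, u \in V -> v \in V -> u + v \in V) &
      (forall c v, Fp_adj z c -> v \in V -> c * v \in V)].

Definition Gnq_gens (zeta b : K) (V : {fset K}) (x : M) : Prop :=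
  (exists2 v, v \in V & x = mx2 1 v 0 1) \/ x = mx2 zeta b 0 zeta^-1.

End Defs.

(* Main.v *)
Require Import Defs.
From HB Require Import structures.
From mathcomp Require Import all_boot all_order all_algebra.
From mathcomp Require Import finmap.
From mathcomp Require Import ring.
Import Order.TTheory GRing.Theory Num.Theory.
Local Open Scope ring_scope.

Section H.
Variable K : fieldType.
Implicit Types A B : 'M[K]_2.

Lemma mx2_eta A : A = mx2 (A 0 0) (A 0 1) (A 1 0) (A 1 1).
Proof.
apply/matrixP => i j; rewrite !mxE.
by case: i => [[|[|//]] Hi]; case: j => [[|[|//]] Hj] /=;
  congr (A _ _); apply: val_inj.
Qed.

Lemma mulE A B i j : (A * B) i j = A i 0 * B 0 j + A i 1 * B 1 j.
Proof. rewrite -[A * B]/(A *m B) mxE !big_ord_recl big_ord0 addr0. by have -> : lift ord0 ord0 = 1 :> 'I_2 by apply: val_inj. Qed.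

Lemma mx2E (a b c d : K) : 
  [/\ mx2 a b c d 0 0 = a, mx2 a b c d 0 1 = b, mx2 a b c d 1 0 = c & mx2 a b c d 1 1 = d].
Proof. by rewrite !mxE. Qed.

Lemma det2 A : \det A = A 0 0 * A 1 1 - A 0 1 * A 1 0.
Proof.
rewrite (expand_det_row _ 0) !big_ord_recl big_ord0 addr0 /cofactor !det_mx11 !mxE /=.
rewrite expr0 expr1 !mul1r mulN1r mulrN; congr (_ * _ - _ * _); congr (A _ _); exact: val_inj.
Qed.


Lemma upper_pow A k : A 1 0 = 0 ->
  [/\ (A ^+ k) 1 0 = 0, (A ^+ k) 0 0 = A 0 0 ^+ k & (A ^+ k) 1 1 = A 1 1 ^+ k].
Proof.
move=> A10; elim: k => [|k [h10 h00 h11]].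
  by rewrite !expr0 !mxE.
by rewrite !exprS !mulE A10 h10 h00 h11 !mul0r !mulr0 !addr0 add0r.
Qed.

Lemma frob1 p (a : K) : p \in [pchar K] -> a ^+ p = 1 -> a = 1.
Proof.
move=> Hp ap; have : (a - 1) ^+ p = 0.
  rewrite -pFrobenius_autE pFrobenius_autB_comm; last exact: commr1.
  by rewrite !pFrobenius_autE ap expr1n subrr.
by move/eqP; rewrite expf_eq0 subr_eq0 => /andP[_ /eqP].
Qed.

Lemma frob1e p e (a : K) : p \in [pchar K] -> a ^+ (p ^ e) = 1 -> a = 1.
Proof.
move=> Hp; elim: e a => [|e IH] a; first by rewrite expn0 expr1.
by rewrite expnSr exprM => /(@frob1 p _ Hp) /IH.
Qed.

Lemma mx2M a b c d a' b' c' d' :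
  mx2 a b c d * mx2 a' b' c' d' = mx2 (a * a' + b * c') (a * b' + b * d') (c * a' + d * c') (c * b' + d * d') :> 'M[K]_2.
Proof.
rewrite [LHS]mx2_eta !mulE; by case: (mx2E a b c d) => -> -> -> ->; case: (mx2E a' b' c' d') => -> -> -> ->.
Qed.

Lemma det_mx2 (a b c d : K) : \det (mx2 a b c d) = a * d - b * c.
Proof. by rewrite det2; case: (mx2E a b c d) => -> -> -> ->. Qed.

End H.

Lemma triang (K : closedFieldType) (A : 'M[K]_2) :
  exists g h : 'M[K]_2, [/\ g * h = 1, \det g = 1 & (g * A * h) 1 0 = 0].
Proof.
have [c0|c0] := eqVneq (A 1 0) 0.
  by exists 1, 1; rewrite !mul1r !mulr1 det1 c0.
have [b0|b0] := eqVneq (A 0 1) 0.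
  exists (mx2 0 1 (-1) 0), (mx2 0 (-1) 1 0); split.
  - by rewrite mx2M (@mx2_eta _ 1) !mxE /= !(mul0r, mulr0, mul1r, mulr1, add0r, addr0, mulrNN).
  - by rewrite det_mx2 !(mul0r, mulr0, mulN1r, mul1r, subr0, opprK, sub0r).
  - by rewrite !mulE !mxE /= b0 !(mul0r, mulr0, mul1r, mulr1, add0r, addr0).
have [t Ht] : exists t : K, t ^+ 2 = ((A 0 0 - A 1 1) / A 0 1) * t + A 1 0 / A 0 1.
  have [t Ht] := @solve_monicpoly K 2 (nth 0 [:: A 1 0 / A 0 1; (A 0 0 - A 1 1) / A 0 1]) isT.
  by exists t; rewrite Ht !big_ord_recl big_ord0 /= addr0 expr0 mulr1 expr1 addrC.
exists (mx2 1 0 t 1), (mx2 1 0 (-t) 1); split.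
- by rewrite mx2M (@mx2_eta _ 1) !mxE /= !(mul0r, mulr0, mul1r, mulr1, add0r, addr0, subrr, addrN).
- by rewrite det_mx2 !(mul0r, mulr0, mulN1r, mul1r, subr0, opprK, sub0r).
rewrite !mulE !mxE /=.
have : A 0 1 * t ^+ 2 = (A 0 0 - A 1 1) * t + A 1 0.
  by rewrite Ht mulrDr mulrA mulrCA divff // mulr1 mulrCA divff // mulr1.
rewrite !(mul0r, mulr0, mul1r, mulr1, add0r, addr0) => E.
apply/eqP; rewrite -subr_eq0; apply/eqP.
rewrite expr2 in E.
transitivity ((A 0 0 - A 1 1) * t + A 1 0 - A 0 1 * (t * t)); first ring.
by rewrite E subrr.
Qed.

Section H2.
Variable K : fieldType.
Implicit Types u w Y W : 'M[K]_2.

Lemma unip_norm u Y W : u 1 0 = 0 -> u 1 1 = 1 -> u 0 1 != 0 ->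
  W 1 0 = 0 -> W 1 1 = 1 -> Y * u = W * Y -> Y 1 0 = 0.
Proof.
move=> u10 u11 u01 W10 W11 E.
have := congr1 (fun M : 'M[K]_2 => M 1 1) E; rewrite /= !mulE u11 W10 W11 mul0r add0r mul1r mulr1.
move/eqP; rewrite -subr_eq0 addrK mulf_eq0 (negPf u01) orbF => /eqP //.
Qed.

Lemma unip_comm u w : u 1 0 = 0 -> u 0 0 = 1 -> u 1 1 = 1 -> u 0 1 != 0 ->
  w * u = u * w -> w 1 0 = 0 /\ w 0 0 = w 1 1.
Proof.
move=> u10 u00 u11 u01 E.
have w10 : w 1 0 = 0.
  exact: (unip_norm u w u u10 u11 u01 u10 u11 E).
split => //.
have := congr1 (fun M : 'M[K]_2 => M 0 1) E; rewrite /= !mulE u00 u11 mul1r mulr1.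
move=> E2; have : (w 0 0 - w 1 1) * u 0 1 = 0.
  rewrite mulrBl; apply/eqP; rewrite subr_eq0; apply/eqP.
  by apply: (addIr (w 0 1)); rewrite E2 addrC mulrC.
by move/eqP; rewrite mulf_eq0 (negPf u01) orbF subr_eq0 => /eqP.
Qed.

Lemma unip_of_p p w : p \in [pchar K] -> w 1 0 = 0 -> w 0 0 = w 1 1 -> w ^+ p = 1 ->
  w = mx2 1 (w 0 1) 0 1.
Proof.
move=> Hp w10 weq wp.
have [_ h00 _] := @upper_pow _ w p w10.
have w00 : w 0 0 = 1 by apply: (@frob1 _ p _ Hp); rewrite -h00 wp mxE.
by rewrite [LHS]mx2_eta w10 -weq w00.
Qed.

Lemma fin_order (G : {fset 'M[K]_2}) x : x \is a GRing.unit -> (forall k, x ^+ k \in G) ->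
  exists2 m, (0 < m)%N & x ^+ m = 1.
Proof.
move=> xu xG.
set s := [seq x ^+ i | i <- iota 0 (#|`G|).+1].
have : ~~ uniq s.
  apply/negP => us.
  have sub : {subset s <= enum_fset G} by move=> y /mapP [i _ ->]; apply: xG.
  by have := uniq_leq_size us sub; rewrite size_map size_iota ltnn.
case/(uniqPn 0) => i [j []]; rewrite size_map size_iota => ij jlt.
rewrite (nth_map 0%N) ?size_iota ?(ltn_trans ij) // (nth_map 0%N) ?size_iota //.
rewrite !nth_iota ?(ltn_trans ij) // !add0n => E.
exists (j - i)%N; first by rewrite subn_gt0.
have : x ^+ i * x ^+ (j - i) = x ^+ i * 1 by rewrite -exprD subnKC ?(ltnW ij) // mulr1.
by move/(congr1 (fun M : 'M[K]_2 => (x ^+ i)^-1 * M)); rewrite !mulKr // unitrX.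
Qed.

End H2.

Section Conj.
Variable K : fieldType.
Variable g : 'M[K]_2.
Hypothesis gd : \det g = 1.

Lemma det1_unit : g \is a GRing.unit.
Proof. by have : g \in unitmx by rewrite unitmxE gd unitr1. Qed.

Let gu := det1_unit.

Lemma cM y z : g * (y * z) * g^-1 = (g * y * g^-1) * (g * z * g^-1).
Proof. by rewrite !mulrA divrK. Qed.

Lemma c1 : g * 1 * g^-1 = 1.
Proof. by rewrite mulr1 divrr. Qed.

Lemma cX y k : g * (y ^+ k) * g^-1 = (g * y * g^-1) ^+ k.
Proof. by elim: k => [|k IH]; rewrite ?expr0 ?c1 // !exprS cM IH. Qed.

Lemma cinj y z : g * y * g^-1 = g * z * g^-1 -> y = z.
Proof. have gVu : g^-1 \is a GRing.unit by rewrite unitrV.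
by move/(mulIr gVu)/(mulrI gu). Qed.

Lemma cdet y : \det (g * y * g^-1) = \det y.
Proof.
rewrite -!mulmxE !det_mulmx gd mul1r.
have := det_mulmx g g^-1; rewrite mulmxE divrr // det1 gd mul1r => <-.
by rewrite mulr1.
Qed.

End Conj.

Lemma triang' (K : closedFieldType) (A : 'M[K]_2) :
  exists g : 'M[K]_2, \det g = 1 /\ (g * A * g^-1) 1 0 = 0.
Proof.
have [g [h [gh gd E]]] := @triang _ A.
exists g; split => //.
suff -> : g^-1 = h by [].
by rewrite -[h](mulKr (@det1_unit _ _ gd)) gh mulr1.
Qed.

Lemma mx2_1 (K : fieldType) : mx2 1 0 0 1 = 1 :> 'M[K]_2.
Proof. by rewrite [RHS]mx2_eta !mxE. Qed.

Local Open Scope fset_scope.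
Local Open Scope ring_scope.

Theorem lemma3p5 (K : closedFieldType) (p : nat) (Hp : p \in [pchar K])
  (G Q : {fset 'M[K]_2}) :
  finite_SL2_subgroup G ->
  is_pSylow p G Q ->
  is_normal_in G Q ->
  elem_abelian p Q ->
  quotient_cyclic G Q ->
  exists (n : nat) (zeta : K) (V : {fset K}) (r : nat) (b : K) (g : 'M[K]_2),
    [/\ (0 < n)%N /\ ~~ (p %| n)%N, n.-primitive_root zeta,
        is_Fp_adj_subspace (zeta ^+ 2) V /\ #|` V| = (p ^ r)%N,
        \det g = 1 &
        forall x : 'M[K]_2,
          (exists2 y, y \in G & x = g * y * g^-1) <->
          generated (Gnq_gens zeta b V) x].
Proof.
move=> [[G1 GM GV] Gdet] [[Q1 QM QV] /fsubsetP QG Qcard] Qn Qab [x xG xgen].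
have pr := pcharf_prime Hp.
have GX : forall y k, y \in G -> y ^+ k \in G.
  by move=> y k yG; elim: k => [|k IH]; rewrite ?expr0 // exprS GM.
have Qcase :
   (exists q0, q0 \in Q /\ q0 != 1) \/ (forall q, q \in Q -> q = 1).
  case: (boolP (all (fun q => q == 1) (enum_fset Q))) => [/allP H|/allPn [q qQ qn1]].
    by right => q qQ; apply/eqP/H.
  by left; exists q.
have key : exists g : 'M[K]_2, [/\ \det g = 1,
    forall y, y \in G -> (g * y * g^-1) 1 0 = 0 &
    forall q, q \in Q -> g * q * g^-1 = mx2 1 ((g * q * g^-1) 0 1) 0 1].
  case: Qcase => [[q0 [q0Q q0n1]] | Qtriv].
    have [g [gd E]] := @triang' _ q0.
    have cM := @cM _ g gd; have c1 := @c1 _ g gd; have cX := @cX _ g gd.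
    set u := g * q0 * g^-1 in E.
    have up : u ^+ p = 1 by rewrite /u -cX (Qab q0 q0 q0Q q0Q).2 c1.
    have [_ u00p u11p] := @upper_pow _ u p E.
    have u00 : u 0 0 = 1 by apply: (@frob1 _ p _ Hp); rewrite -u00p up mxE.
    have u11 : u 1 1 = 1 by apply: (@frob1 _ p _ Hp); rewrite -u11p up mxE.
    have u01 : u 0 1 != 0.
      apply/eqP => u01; move/eqP: q0n1; apply.
      apply: (@cinj _ g gd); rewrite c1 -/u [u]mx2_eta u00 u11 u01 E.
      exact: mx2_1.
    have Qf : forall q, q \in Q -> g * q * g^-1 = mx2 1 ((g * q * g^-1) 0 1) 0 1.
      move=> q qQ.
      have wc : (g * q * g^-1) * u = u * (g * q * g^-1).
        by rewrite /u -!cM (Qab q q0 qQ q0Q).1.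
      have [w10 weq] := @unip_comm _ u _ E u00 u11 u01 wc.
      apply: (@unip_of_p _ p _ Hp w10 weq).
      by rewrite -cX (Qab q q qQ qQ).2 c1.
    exists g; split => // y yG.
    have q'Q := Qn y q0 yG q0Q.
    have yu := (GV y yG).1.
    have Ey : y * q0 = (y * q0 * y^-1) * y by rewrite divrK.
    have Ec : (g * y * g^-1) * u = (g * (y * q0 * y^-1) * g^-1) * (g * y * g^-1).
      by rewrite /u -!cM -Ey.
    apply: (@unip_norm _ u _ _ E u11 u01 _ _ Ec); rewrite (Qf _ q'Q) mxE //.
  have [g [gd E]] := @triang' _ x.
  have cM := @cM _ g gd; have c1 := @c1 _ g gd; have cX := @cX _ g gd.
  exists g; split => //.
    move=> y /xgen [k [q qQ ->]]; rewrite (Qtriv q qQ) mulr1 cX.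
    by case: (@upper_pow _ _ k E).
  move=> q /Qtriv ->; rewrite c1 mxE /=.
  by rewrite mx2_1.
case: key => g [gd U Qf].
have cM := @cM _ g gd; have c1 := @c1 _ g gd; have cX := @cX _ g gd.
have Qent : forall q, q \in Q -> [/\ (g * q * g^-1) 0 0 = 1, (g * q * g^-1) 1 0 = 0
    & (g * q * g^-1) 1 1 = 1].
  by move=> q qQ; rewrite (Qf q qQ) !mxE.
have X10 : (g * x * g^-1) 1 0 = 0 := U x xG.
set X := g * x * g^-1 in X10.
have dX : X 0 0 * X 1 1 = 1.
  by have := Gdet x xG; rewrite -(@cdet _ g gd) -/X det2 X10 mulr0 subr0.
set z := X 0 0 in dX; set bb := X 0 1.
have zn0 : z != 0 by apply/eqP => z0; move: dX; rewrite z0 mul0r => /eqP; rewrite eq_sym oner_eq0.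
have X11 : X 1 1 = z^-1 by rewrite -[X 1 1](mulKf zn0) dX mulr1.
have Xe : X = mx2 z bb 0 z^-1 by rewrite [LHS]mx2_eta X10 X11.
have [m m0 xm] := @fin_order _ G x (GV x xG).1 (fun k => GX x k xG).
have zm : z ^+ m = 1.
  by have [_ h _] := @upper_pow _ X m X10; rewrite -h /X -cX xm c1 mxE.
have zm' : z ^+ (m`_p^') = 1.
  apply: (@frob1e _ p (logn p m) _ Hp).
  by rewrite -exprM mulnC -p_part partnC.
have [n prim ndvd] := prim_order_exists (part_gt0 _ _) zm'.
have n0 := prim_order_gt0 prim.
have pn : ~~ (p %| n)%N.
  apply/negP => pn.
  have : ~~ (p %| m`_p^')%N by rewrite -p'natE // part_pnat.
  by rewrite (dvdn_trans pn ndvd).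
pose V := [fset (g * q * g^-1) 0 1 | q in Q].
have V0 : (0 : K) \in V by apply/imfsetP; exists 1 => //=; rewrite c1 mxE.
have VD : forall u v, u \in V -> v \in V -> u + v \in V.
  move=> _ _ /imfsetP[q1 q1Q ->] /imfsetP[q2 q2Q ->]; apply/imfsetP.
  exists (q1 * q2); first exact: QM.
  have [h00 _ _] := Qent q1 q1Q; have [_ _ h11] := Qent q2 q2Q.
  by rewrite cM (@mulE _ (g * q1 / g)) h00 h11 mul1r mulr1 addrC.
have Vz : forall v, v \in V -> z ^+ 2 * v \in V.
  move=> _ /imfsetP[q qQ ->]; apply/imfsetP.
  have q'Q := Qn x q xG qQ.
  exists (x * q * x^-1) => //.
  have xu := (GV x xG).1.
  have Ex : x * q = (x * q * x^-1) * x by rewrite divrK.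
  have Ec : X * (g * q * g^-1) = (g * (x * q * x^-1) * g^-1) * X.
    by rewrite /X -!cM -Ex.
  have := congr1 (fun M : 'M[K]_2 => M 0 1) Ec; rewrite /= (@mulE _ X) (@mulE _ (g * (x * q * x^-1) / g)).
  have [_ _ h11] := Qent q qQ; have [h00 _ _] := Qent _ q'Q.
  rewrite h11 h00 X11 mulr1 mul1r -/z -/bb addrC => /addrI E.
  by rewrite -[RHS](divfK zn0) -E; ring.
exists n, z, V, (logn p #|`G|), bb, g; split => //.
- split; first split => //.
  + move=> _ v [P [Pc ->]] vV.
    have Vpow : forall i w, w \in V -> (z ^+ 2) ^+ i * w \in V.
      by elim=> [|i IH] w wV; rewrite ?expr0 ?mul1r // exprS -mulrA Vz // IH.
    have Vnat : forall k w, w \in V -> w *+ k \in V.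
      by elim=> [|k IH] w wV; rewrite ?mulr0n // mulrS VD // IH.
    rewrite horner_coef mulr_suml.
    apply: (big_ind (fun w => w \in V)) => //.
    move=> i _; have [k ->] := Pc i.
    by rewrite -mulrA mulr_natl Vnat // Vpow.
  + have /card_in_imfsetP/eqP -> : {in Q &, injective (fun q => (g * q * g^-1) 0 1)}.
      move=> q1 q2 q1Q q2Q /= E.
      by apply: (@cinj _ g gd); rewrite (Qf q1 q1Q) (Qf q2 q2Q) E.
    by rewrite Qcard p_part.
- move=> y; split.
  + move=> [y' y'G ->] H; rewrite /subgroup_pred => -[H1 HM HV] Hgen.
    have [k [q qQ ->]] := xgen y' y'G.
    rewrite cM cX (Qf q qQ) -/X; apply: (HM).
      elim: k => [|k IH]; rewrite ?expr0 // exprS; apply: (HM) IH.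
      by apply: (Hgen); right.
    by apply: (Hgen); left; exists ((g * q * g^-1) 0 1) => //; apply: in_imfset.
  + move=> Hg; apply: (Hg (fun z => exists2 y, y \in G & z = g * y * g^-1)).
      split.
      * by exists 1 => //; rewrite c1.
      * by move=> _ _ [y1 y1G ->] [y2 y2G ->]; exists (y1 * y2); rewrite ?cM ?GM.
      * move=> _ [y' y'G ->].
        have [yu yVG] := GV y' y'G.
        have E1 : (g * y' * g^-1) * (g * y'^-1 * g^-1) = 1 by rewrite -cM mulrV.
        have E2 : (g * y'^-1 * g^-1) * (g * y' * g^-1) = 1 by rewrite -cM mulVr.
        have cu : g * y' * g^-1 \is a GRing.unit by apply/unitrP; exists (g * y'^-1 * g^-1).
        split => //; exists y'^-1 => //.
        by rewrite -[RHS](mulKr cu) E1 mulr1.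
    move=> _ [[v /imfsetP [q qQ ->] ->] | ->].
      by exists q; [apply: QG | rewrite -Qf].
    by exists x; rewrite // -/X Xe.
Qed.
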